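(* Let $n\ge1$ and let $P=\{(i,j)\colon 1\le i\le j\le n\}$ be the shifted staircase. Fix $0\le k\le n-1$ and let $B=\{(i,j)\in P\colon j-i=k\}$. Then $\sum_{p\in B}\mathbb{1}_p\equiv (n-k)/2$.
   Context: $P$ is ordered by $(i,j)\le(i',j')$ iff $i\le i'$ and $j\le j'$. $\mathcal{J}(P)$ is the set of order ideals of $P$. For $x\in P$, $I\in\mathcal{J}(P)$: $\mathbb{1}_x(I)=1$ if $x\in I$, else $0$; $T_x^+(I)=1$ if $x$ is a minimal element of $P\setminus I$, else $0$; $T_x^-(I)=1$ if $x$ is a maximal element of $I$, else $0$; $T_x=T_x^+-T_x^-$. For $f,g\colon\mathcal{J}(P)\to\mathbb{R}$, $f\equiv g$ means $f-g=\sum_{x\in P}c_xT_x$ for some real constants $c_x$; a real number denotes the corresponding constant function. *)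

(* Defs.v *)
From mathcomp Require Import all_boot all_order all_algebra.
From mathcomp Require Import reals.
Set Implicit Arguments. Unset Strict Implicit. Unset Printing Implicit Defensive.
Import Order.TTheory GRing.Theory Num.Theory.

(* Shifted staircase P = {(i,j) : 1 <= i <= j <= n}, encoded 0-based:
   (i,j) is represented by (i-1, j-1) : 'I_n * 'I_n with i-1 <= j-1. *)
Definition stair (n : nat) := {x : 'I_n * 'I_n | (x.1 <= x.2)%N}.

Definition sle n (x y : stair n) : bool :=
  ((val x).1 <= (val y).1)%N && ((val x).2 <= (val y).2)%N.

Definition slt n (x y : stair n) : bool := (x != y) && sle x y.

Definition is_ideal n (I : {set stair n}) : Prop :=
  forall x y : stair n, y \in I -> sle x y -> x \in I.

Local Open Scope ring_scope.

Definition ind (R : realType) n (x : stair n) (I : {set stair n}) : R :=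
  (x \in I)%:R.

Definition Tplus (R : realType) n (x : stair n) (I : {set stair n}) : R :=
  ((x \notin I) && [forall y, slt y x ==> (y \in I)])%:R.

Definition Tminus (R : realType) n (x : stair n) (I : {set stair n}) : R :=
  ((x \in I) && [forall y, slt x y ==> (y \notin I)])%:R.

Definition toggle (R : realType) n (x : stair n) (I : {set stair n}) : R :=
  Tplus R x I - Tminus R x I.

Definition toggle_equiv (R : realType) n (f g : {set stair n} -> R) : Prop :=
  exists c : stair n -> R, forall I : {set stair n}, is_ideal I ->
    f I - g I = \sum_(x : stair n) c x * toggle R x I.

(* Main.v *)
Require Import Defs.
From mathcomp Require Import all_boot all_order all_algebra.
From mathcomp Require Import reals ring lra zify.
Import Order.TTheory GRing.Theory Num.Theory.
Set Implicit Arguments. Unset Strict Implicit.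
Local Open Scope ring_scope.
Lemma sum_stair0 (R : realType) n (F : nat -> nat -> R) :
  \sum_(x : stair n) F (val x).1 (val x).2 =
  \sum_(p : 'I_n * 'I_n | (p.1 <= p.2)%N) F p.1 p.2.
Proof.
symmetry.
rewrite (reindex_omap (val : stair n -> _) insub); last first.
  by move=> i Pi; rewrite insubT.
apply: eq_bigl=> -[i iA]/=; by rewrite insubT ?iA /= eqxx.
Qed.

Lemma inner_re (R : realType) n i (hi : (i < n)%N) (G : nat -> R) :
  \sum_(j < n | (i <= j)%N) G j =
  \sum_(0 <= d < n) (if (i + d < n)%N then G (i + d)%N else 0).
Proof.
rewrite -(big_mkord (fun j => (i <= j)%N) G).
rewrite (big_cat_nat (leq0n i) (ltnW hi)) /=.
rewrite big_nat_cond big1 ?add0r; last first.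
  by move=> j /andP[/andP[_ hj]]; rewrite leqNgt hj.
have := big_addn 0 n i (fun j => (i <= j)%N) G; rewrite add0n => ->.
rewrite [RHS](big_cat_nat (leq0n (n-i)) (leq_subr i n)) /=.
rewrite [X in _ = _ + X]big_nat_cond [X in _ = _ + X]big1 ?addr0; last first.
  move=> d /andP[/andP[hd _] _]; case: ifP => //; lia.
rewrite big_nat_cond [RHS]big_nat_cond; apply: eq_big => d.
  by rewrite leq_addl !andbT.
move=> /andP[/andP[_ hd] _]; rewrite ifT ?(addnC d i) //; lia.
Qed.

Lemma sum_stair (R : realType) n (F : nat -> nat -> R) :
  \sum_(x : stair n) F (val x).1 (val x).2 =
  \sum_(0 <= d < n) \sum_(0 <= a < n | (a + d < n)%N) F a (a + d)%N.
Proof.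
rewrite sum_stair0.
transitivity (\sum_(i < n) \sum_(j < n | (i <= j)%N) F i j).
  by rewrite pair_big_dep.
transitivity (\sum_(0 <= i < n) \sum_(0 <= d < n) (if (i + d < n)%N then F i (i+d)%N else 0)).
  rewrite big_mkord; apply: eq_bigr => i _.
  exact: (@inner_re R n i (ltn_ord i) (F i)).
rewrite exchange_big /=; apply: eq_bigr => d _.
by rewrite [RHS]big_mkcond.
Qed.
Section Main.
Variables (R : realType) (n : nat) (I : {set stair n}).
Hypothesis hI : is_ideal I.

Definition jj (a b : nat) : bool :=
  [exists x : stair n, [&& x \in I, ((val x).1 == a :> nat) & ((val x).2 == b :> nat)]].

Lemma stair_eq (x y : stair n) :
  (val x).1 = (val y).1 :> nat -> (val x).2 = (val y).2 :> nat -> x = y.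
Proof.
move=> e1 e2; apply: val_inj; case: (val x) e1 e2 => [x1 x2]; case: (val y) => [y1 y2] /= e1 e2.
by congr pair; apply: val_inj.
Qed.

Lemma jj_range a b : jj a b -> (a <= b < n)%N.
Proof.
case/existsP=> x /and3P[_ /eqP <- /eqP <-].
by rewrite (valP x) ltn_ord.
Qed.

Lemma jj_mem (x : stair n) : jj (val x).1 (val x).2 = (x \in I).
Proof.
apply/idP/idP.
  case/existsP=> y /and3P[yI /eqP e1 /eqP e2].
  by rewrite -(stair_eq e1 e2).
by move=> xI; apply/existsP; exists x; rewrite xI !eqxx.
Qed.

Definition mk (a b : nat) (hab : (a <= b)%N) (hb : (b < n)%N) : stair n :=
  exist (fun x : 'I_n * 'I_n => (x.1 <= x.2)%N) (Ordinal (leq_ltn_trans hab hb), Ordinal hb) hab.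

Lemma jj_mk a b hab hb : jj a b = (@mk a b hab hb \in I).
Proof. by rewrite -jj_mem. Qed.

Lemma jj_cl a b a' b' : jj a b -> (a' <= a)%N -> (b' <= b)%N -> (a' <= b')%N -> jj a' b'.
Proof.
move=> h ha hb hab; have /andP[h1 h2] := jj_range h.
have hb' : (b' < n)%N by lia.
case/existsP: h => x /and3P[xI /eqP e1 /eqP e2].
rewrite (jj_mk hab hb'); apply: (hI xI).
by rewrite /sle /= e1 e2 ha hb.
Qed.

Definition X a b : R := (jj a b)%:R.
Definition Tp a b : R :=
  [&& (b < n)%N, ~~ jj a b, (a == 0)%N || jj a.-1 b & (a == b) || jj a b.-1]%:R.
Definition Tm a b : R := [&& jj a b, ~~ jj a.+1 b & ~~ jj a b.+1]%:R.

Lemma slt_E (y x : stair n) : slt y x =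
  [&& ((val y).1 != (val x).1 :> nat) || ((val y).2 != (val x).2 :> nat),
      ((val y).1 <= (val x).1)%N & ((val y).2 <= (val x).2)%N].
Proof.
rewrite /slt /sle; congr (_ && _).
apply/idP/idP.
  apply: contraNT; rewrite negb_or !negbK => /andP[/eqP e1 /eqP e2].
  by apply/eqP; apply: stair_eq.
by apply: contraTneq => ->; rewrite !eqxx.
Qed.

Lemma toggle_eq (x : stair n) :
  toggle R x I = Tp (val x).1 (val x).2 - Tm (val x).1 (val x).2.
Proof.
rewrite /toggle /Tplus /Tminus /Tp /Tm -jj_mem ltn_ord /=.
have hab : ((val x).1 <= (val x).2)%N := valP x.
have hbn := ltn_ord (val x).2.
move: x hab hbn => [[a' b'] hab0] /= hab hbn.
set a := nat_of_ord a' in hab hbn *.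
set b := nat_of_ord b' in hab hbn *.
congr ((nat_of_bool _)%:R - (nat_of_bool _)%:R).
  case: (jj a b) => //=.
  apply/idP/idP.
    move/forallP => H; apply/andP; split.
      case: (posnP a) => [->//|ha]; apply/orP; right.
      have h1 : (a.-1 <= b)%N by lia.
      rewrite (jj_mk h1 hbn); apply: (implyP (H _)).
      rewrite slt_E /=; apply/and3P; split; lia.
    case: (eqVneq a b) => [//|hne]; apply/orP; right.
    have h1 : (a <= b.-1)%N by lia.
    have h2 : (b.-1 < n)%N by lia.
    rewrite (jj_mk h1 h2); apply: (implyP (H _)).
    rewrite slt_E /=; apply/and3P; split; lia.
  case/andP=> H1 H2; apply/forallP => -[[c d] hcd]; apply/implyP; rewrite slt_E /=.
  move=> /and3P[hne le1 le2].
  rewrite -jj_mem /=.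
  rewrite /= in hcd.
  case: (ltnP c a) => hlt.
    have ha : (a == 0)%N = false by lia.
    rewrite ha /= in H1.
    apply: (jj_cl H1) => //; lia.
  have hab' : (a == b)%N = false by lia.
  rewrite hab' /= in H2.
  apply: (jj_cl H2) => //; lia.
case: (jj a b) => //=.
apply/idP/idP.
  move/forallP => H; apply/andP; split.
    apply/negP => hj; have /andP[h1 h2] := jj_range hj.
    move: hj; rewrite (jj_mk h1 h2) => hj.
    have := implyP (H (mk h1 h2)); rewrite hj => H'.
    suff: ~~ true by []. apply: H'.
    rewrite slt_E /=; apply/and3P; split; lia.
  apply/negP => hj; have /andP[h1 h2] := jj_range hj.
  move: hj; rewrite (jj_mk h1 h2) => hj.
  have := implyP (H (mk h1 h2)); rewrite hj => H'.
  suff: ~~ true by []. apply: H'.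
  rewrite slt_E /=; apply/and3P; split; lia.
case/andP=> H1 H2; apply/forallP => -[[c d] hcd]; apply/implyP; rewrite slt_E /=.
move=> /and3P[hne le1 le2].
rewrite -jj_mem /=; apply/negP => hy.
rewrite /= in hcd.
have hyb := ltn_ord d.
case: (ltnP b d) => hlt.
  move/negP: H2; apply; apply: (jj_cl hy) => //; lia.
move/negP: H1; apply; apply: (jj_cl hy) => //; lia.
Qed.

Definition Q a d : R := (jj a.+1 (a+d) && jj a (a+d).+1)%:R.
Definition S e : R := \sum_(0 <= a < n) X a (a+e).

Lemma jjOut a b : (n <= b)%N -> jj a b = false.
Proof. by move=> h; apply/negbTE/negP => hj; have := jj_range hj; lia. Qed.

Lemma XOut a b : (n <= b)%N -> X a b = 0.
Proof. by move=> h; rewrite /X jjOut. Qed.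

Lemma TpOut a b : (n <= b)%N -> Tp a b = 0.
Proof. by move=> h; rewrite /Tp ltnNge h. Qed.

Lemma locM a d : Tm a (a+d) = X a (a+d) - X a.+1 (a+d) - X a (a+d).+1 + Q a d.
Proof.
have h1 : jj a.+1 (a+d) -> jj a (a+d) by move=> h; apply: (jj_cl h); lia.
have h2 : jj a (a+d).+1 -> jj a (a+d) by move=> h; apply: (jj_cl h); lia.
rewrite /Tm /X /Q.
move: h1 h2; case: (jj a (a+d)); case: (jj a.+1 (a+d)); case: (jj a (a+d).+1) => /= h1 h2;
  first [ by move: (h1 isT) | by move: (h2 isT) | ring ].
Qed.

Lemma locP a d : (0 < d)%N -> Tp a.+1 (a.+1+d) = Q a d - X a.+1 (a.+1+d).
Proof.
move=> hd; rewrite addSn /Tp /Q /X /=.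
have -> : (a.+1 == (a+d).+1) = false by lia.
case: (ltnP (a+d).+1 n) => hg /=; last by rewrite (@jjOut a (a+d).+1 hg) (@jjOut a.+1 (a+d).+1 hg) !andbF /= subr0.
have h1 : jj a.+1 (a+d).+1 -> jj a (a+d).+1 by move=> h; apply: (jj_cl h); lia.
have h2 : jj a.+1 (a+d).+1 -> jj a.+1 (a+d) by move=> h; apply: (jj_cl h); lia.
move: h1 h2; case: (jj a.+1 (a+d).+1); case: (jj a.+1 (a+d)); case: (jj a (a+d).+1) => /= h1 h2;
  first [ by move: (h1 isT) | by move: (h2 isT) | ring ].
Qed.

Lemma locP0 a : Tp a.+1 a.+1 = X a a.+1 - X a.+1 a.+1.
Proof.
rewrite /Tp /X /= eqxx /= andbT.
case: (ltnP a.+1 n) => hg /=; last by rewrite (@jjOut a a.+1 hg) (@jjOut a.+1 a.+1 hg) /= subr0.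
have h1 : jj a.+1 a.+1 -> jj a a.+1 by move=> h; apply: (jj_cl h); lia.
move: h1; case: (jj a.+1 a.+1); case: (jj a a.+1) => /= h1;
  first [ by move: (h1 isT) | ring ].
Qed.

Lemma locM0 a : Tm a a = X a a - X a a.+1.
Proof.
have h1 : jj a a.+1 -> jj a a by move=> h; apply: (jj_cl h); lia.
rewrite /Tm /X /=.
have -> : jj a.+1 a = false by apply/negbTE/negP => hj; have := jj_range hj; lia.
move: h1; case: (jj a a); case: (jj a a.+1) => /= h1;
  first [ by move: (h1 isT) | ring ].
Qed.

Lemma Tp0d d : (0 < d)%N -> (d < n)%N -> Tp 0 d = X 0 d.-1 - X 0 d.
Proof.
move=> hd hdn; rewrite /Tp /X hdn /=.
have -> : (0 == d)%N = false by lia.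
have h1 : jj 0 d -> jj 0 d.-1 by move=> h; apply: (jj_cl h); lia.
move: h1; case: (jj 0 d); case: (jj 0 d.-1) => /= h1;
  first [ by move: (h1 isT) | ring ].
Qed.

Lemma Tp00 : (0 < n)%N -> Tp 0 0 = 1 - X 0 0.
Proof.
move=> hn; rewrite /Tp /X hn /=.
case: (jj 0 0) => /=; ring.
Qed.

Lemma shift (h : nat -> R) : h n = 0 ->
  \sum_(0 <= a < n) h a = h 0%N + \sum_(0 <= a < n) h a.+1.
Proof.
move=> hn0; rewrite -big_nat_recl // big_nat_recr //= hn0 addr0; by apply: eq_bigr.
Qed.

Lemma Sshift e : \sum_(0 <= a < n) X a.+1 (a.+1 + e) = S e - X 0 e.
Proof.
rewrite /S (@shift (fun a => X a (a+e))) /=; last by rewrite XOut // leq_addr.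
rewrite add0n; ring.
Qed.

Lemma diagS e : (e.+1 < n)%N ->
  \sum_(0 <= a < n) (Tp a (a + e.+1) - Tm a (a + e.+1)) = S e - 2 * S e.+1 + S e.+2.
Proof.
move=> hd; rewrite sumrB (@shift (fun a => Tp a (a + e.+1))) /=; last by rewrite TpOut // leq_addr.
rewrite add0n Tp0d //= -addrA -sumrB.
have -> : \sum_(0 <= i < n) (Tp i.+1 (i.+1 + e.+1) - Tm i (i + e.+1)) =
   \sum_(0 <= i < n) (X i.+1 (i.+1 + e) - X i.+1 (i.+1 + e.+1) - X i (i + e.+1) + X i (i + e.+2)).
  apply: eq_bigr => i _; rewrite locP // locM.
  rewrite !addSn !addnS; ring.
rewrite big_split /= !sumrB !Sshift /S; ring.
Qed.

Lemma diag0 : (0 < n)%N ->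
  \sum_(0 <= a < n) (Tp a (a + 0) - Tm a (a + 0)) = 1 - 2 * S 0 + 2 * S 1.
Proof.
move=> hn.
have -> : \sum_(0 <= a < n) (Tp a (a + 0) - Tm a (a + 0)) = \sum_(0 <= a < n) (Tp a a - Tm a a).
  by apply: eq_bigr => a _; rewrite addn0.
rewrite sumrB (@shift (fun a => Tp a a)) /=; last by rewrite TpOut.
rewrite Tp00 // -addrA -sumrB.
have -> : \sum_(0 <= i < n) (Tp i.+1 i.+1 - Tm i i) =
   \sum_(0 <= i < n) (X i (i + 1) - X i.+1 (i.+1 + 0) - X i (i + 0) + X i (i + 1)).
  apply: eq_bigr => i _; rewrite locP0 locM0 !addn0 addn1; ring.
rewrite big_split /= !sumrB Sshift /S; ring.
Qed.
End Main.
Lemma sbp (R : realType) (g S : nat -> R) N :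
  \sum_(0 <= d < N) g d.+1 * (S d - 2 * S d.+1 + S d.+2) =
  \sum_(0 <= d < N) S d.+1 * (g d - 2 * g d.+1 + g d.+2)
  + g 1%N * S 0%N - g 0%N * S 1%N + g N * S N.+1 - g N.+1 * S N.
Proof.
elim: N => [|N IH]; first by rewrite !big_geq //; ring.
by rewrite !big_nat_recr //= IH; ring.
Qed.

Definition gam (R : realType) n k d : R :=
  if d == 0%N then (k%:R - n%:R) / 2 else (maxn d k)%:R - n%:R.
Definition LL (R : realType) (S : nat -> R) d :=
  if d == 0%N then 1 - 2 * S 0%N + 2 * S 1%N else S d.-1 - 2 * S d + S d.+1.

Lemma final (R : realType) n k (S : nat -> R) : (1 <= n)%N -> (k <= n.-1)%N -> S n = 0 ->
  \sum_(0 <= d < n) gam R n k d * LL S d = S k - (n - k)%:R / 2.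
Proof.
case: n => [//|N] _ /= hk hS.
rewrite big_nat_recl //.
pose g d : R := (maxn d k)%:R - N.+1%:R.
have -> : \sum_(0 <= i < N) gam R N.+1 k i.+1 * LL S i.+1 =
   \sum_(0 <= d < N) g d.+1 * (S d - 2 * S d.+1 + S d.+2) by [].
rewrite sbp.
have -> : \sum_(0 <= d < N) S d.+1 * (g d - 2 * g d.+1 + g d.+2) =
          \sum_(0 <= d < N) S d.+1 * (d.+1 == k)%:R.
  apply: eq_bigr => d _; congr (_ * _); rewrite /g.
  have H : (maxn d k + maxn d.+2 k = 2 * maxn d.+1 k + (d.+1 == k))%N.
    case: eqP => e; lia.
  have := congr1 (fun m => m%:R : R) H; rewrite !natrD ?natrM /= => H'.
  rewrite addr0 in H'; lra.
rewrite hS /g /gam /LL /=.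
have -> : maxn N.+1 k = N.+1 by apply/maxn_idPl; lia.
rewrite natrB; last by lia.
rewrite {}/g. case: k hk => [|k] hk.
  rewrite big1 ?add0r; last by move=> i _; rewrite /= mulr0.
  rewrite !maxn0; lra.
rewrite big_mkord (bigD1 (Ordinal (hk : (k < N)%N))) //= eqxx mulr1.
rewrite big1 ?addr0; last first.
  move=> i hi; rewrite eqSS.
  have -> : (i == k :> nat) = false.
    by apply/negbTE; apply: contra hi => /eqP e; apply/eqP/val_inj.
  by rewrite mulr0.
have -> : maxn 1 k.+1 = k.+1 by apply/maxn_idPr.
have -> : maxn 0 k.+1 = k.+1 by [].
lra.
Qed.

Lemma pick_k (R : realType) n k (f : nat -> R) : (k < n)%N ->
  \sum_(0 <= d < n) (if d == k then f d else 0) = f k.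
Proof.
move=> hk; rewrite big_mkord (bigD1 (Ordinal hk)) //= eqxx big1 ?addr0 // => i hi.
rewrite ifF //; apply/negbTE; apply: contra hi => /eqP e; apply/eqP/val_inj; exact: e.
Qed.

Theorem theorem3p17 (R : realType) (n k : nat) (hn : (1 <= n)%N) (hk : (k <= n.-1)%N) :
  toggle_equiv
    (fun I : {set stair n} =>
       \sum_(p : stair n | ((val p).2 - (val p).1 == k)%N) ind R p I)
    (fun _ => (n - k)%:R / 2).
Proof.
exists (fun x : stair n => gam R n k ((val x).2 - (val x).1)%N).
move=> I hI.
have hkn : (k < n)%N by lia.
have E1 : \sum_(x : stair n) gam R n k ((val x).2 - (val x).1)%N * toggle R x I =
          \sum_(0 <= d < n) gam R n k d * LL (@S R n I) d.
  transitivity (\sum_(x : stair n) (fun a b => gam R n k (b - a)%N * (@Tp R n I a b - @Tm R n I a b)) (val x).1 (val x).2).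
    by apply: eq_bigr => x _; rewrite (@toggle_eq R n I hI).
  rewrite (@sum_stair R n (fun a b => gam R n k (b - a)%N * (@Tp R n I a b - @Tm R n I a b))); apply: eq_big_nat => d /andP[_ hd].
  transitivity (gam R n k d * \sum_(0 <= a < n) (@Tp R n I a (a+d) - @Tm R n I a (a+d))).
    rewrite mulr_sumr big_mkcond; apply: eq_bigr => a _ /=.
    case: ifP => h; first by rewrite addKn.
    have h' : (n <= a + d)%N by lia.
    by rewrite TpOut // /Tm (@jjOut n I a (a+d) h') /= subrr mulr0.
  congr (_ * _); case: d hd => [|e] hd; first by rewrite diag0.
  by rewrite diagS.
have E2 : \sum_(p : stair n | ((val p).2 - (val p).1 == k)%N) ind R p I = @S R n I k.
  rewrite big_mkcond /=.
  transitivity (\sum_(x : stair n) (fun a b => if (b - a == k)%N then @X R n I a b else 0) (val x).1 (val x).2).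
    by apply: eq_bigr => x _ /=; rewrite /ind /X jj_mem.
  rewrite (@sum_stair R n (fun a b => if (b - a == k)%N then @X R n I a b else 0)).
  transitivity (\sum_(0 <= d < n) (if d == k then \sum_(0 <= a < n | (a + d < n)%N) @X R n I a (a+d) else 0)).
    apply: eq_bigr => d _; case: eqP => e.
      by apply: eq_bigr => a _; rewrite addKn e eqxx.
    by apply: big1 => a _; rewrite addKn; move/eqP/negbTE: e => ->.
  rewrite (pick_k (fun d => \sum_(0 <= a < n | (a + d < n)%N) @X R n I a (a+d)) hkn).
  rewrite big_mkcond /S; apply: eq_bigr => a _; case: ifP => // h.
  by rewrite XOut //; lia.
rewrite E1 E2 final //.
by rewrite /S big1 // => a _; rewrite XOut // leq_addl.
Qed.
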